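(* For $\theta\in[0,\pi/2]$ let $C_\theta=\cos\theta\,(|\uparrow\rangle\langle\uparrow|+|\downarrow\rangle\langle\downarrow|)+\sin\theta\,(|\uparrow\rangle\langle\downarrow|-|\downarrow\rangle\langle\uparrow|)$ and $\gamma_*=\tfrac{1}{\sqrt2}(|\uparrow\rangle+i|\downarrow\rangle)$. Then: (i) for every $\theta\in[0,\pi/2]$ the coin setup $(C_\theta,\gamma_* )$ is symmetric in distribution; (ii) every coin setup $(C,\gamma)$ (with $C\in U(2)$ arbitrary and $\gamma\in\mathbb{C}^2$ a unit vector) that is symmetric in distribution is distributionally equivalent to $(C_\theta,\gamma_* )$ for some $\theta\in[0,\pi/2]$; (iii) if $\theta,\theta'\in[0,\pi/2]$ and $(C_\theta,\gamma_* )\sim_d(C_{\theta'},\gamma_* )$, then $\theta=\theta'$. In other words, $\theta\mapsto(C_\theta,\gamma_* )$ induces a bijection between $[0,\pi/2]$ and the distributional equivalence classes of coin setups that are symmetric in distribution.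
   Context: Let $\mathcal{H}=\ell^2(\mathbb{Z})\otimes\mathbb{C}^2$, with position basis $\{|j\rangle: j\in\mathbb{Z}\}$ of $\ell^2(\mathbb{Z})$ and orthonormal basis $\{|\uparrow\rangle,|\downarrow\rangle\}$ of $\mathbb{C}^2$. A (quantum) coin is any $C\in U(2)$. The conditional translation is $T=\sum_{j\in\mathbb{Z}}|j+1\rangle\langle j|\otimes|\uparrow\rangle\langle\uparrow|+\sum_{j\in\mathbb{Z}}|j-1\rangle\langle j|\otimes|\downarrow\rangle\langle\downarrow|$ and the walk operator is $W(C)=T(\mathbb{1}\otimes C)$. A coin setup is a pair $(C,\gamma)$ with $C\in U(2)$ and $\gamma\in\mathbb{C}^2$ a unit vector (the initial coin state). Its induced distributions are $p_{(C,\gamma)}(j,n)=\langle\psi_n|(|j\rangle\langle j|\otimes\mathbb{1})|\psi_n\rangle$ with $\psi_n=W(C)^n(|0\rangle\otimes\gamma)$, for $j\in\mathbb{Z}$, $n\in\mathbb{N}$. A coin setup is called symmetric in distribution if $p_{(C,\gamma)}(j,n)=p_{(C,\gamma)}(-j,n)$ for all $j\in\mathbb{Z}$ and all $n\in\mathbb{N}$. Two coin setups $\mathcal{C}_1,\mathcal{C}_2$ are distributionally equivalent, written $\mathcal{C}_1\sim_d\mathcal{C}_2$, if $p_{\mathcal{C}_1}(j,n)=p_{\mathcal{C}_2}(j,n)$ for all $j\in\mathbb{Z}$, $n\in\mathbb{N}$. *)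

(* Defs.v *)
From HB Require Import structures.
From mathcomp Require Import all_boot all_order all_algebra.
From mathcomp Require Import complex.
From mathcomp Require Import Rstruct.
From Stdlib Require Import Reals.
Set Implicit Arguments. Unset Strict Implicit. Unset Printing Implicit Defensive.
Import Order.TTheory GRing.Theory Num.Theory.
Local Open Scope ring_scope.
Local Open Scope complex_scope.

Notation Cx := (Rdefinitions.R[i]).

Definition sqmod (z : Cx) : Rdefinitions.R := (complex.Re z) ^+ 2 + (complex.Im z) ^+ 2.

Definition up : 'I_2 := ord0.
Definition down : 'I_2 := ord_max.

Definition coin := 'M[Cx]_2.
Definition adjoint (C : coin) : coin := (map_mx (@conjc _) C)^T.
Definition unitary (C : coin) : Prop := C *m adjoint C = 1%:M.

Definition cstate := 'cV[Cx]_2.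
Definition unit_vec (g : cstate) : Prop := sqmod (g up 0) + sqmod (g down 0) = 1.

(* Vectors of H = l^2(Z) (x) C^2, written as functions Z -> C^2
   (all states occurring below are finitely supported). *)
Definition hstate := int -> cstate.

(* Walk operator W(C) = T (1 (x) C):
   (W psi)(j) has up-component  (C psi(j-1))_up   (up moves j-1 -> j)
              and down-component (C psi(j+1))_down (down moves j+1 -> j). *)
Definition walk (C : coin) (psi : hstate) : hstate :=
  fun j => \col_(k < 2)
    (if k == up then (C *m psi (j - 1)) up 0 else (C *m psi (j + 1)) down 0).

Definition init (g : cstate) : hstate := fun j => if j == 0 then g else 0.

Definition psi (C : coin) (g : cstate) (n : nat) : hstate := iter n (walk C) (init g).

(* p_(C,gamma)(j,n) = <psi_n | (|j><j| (x) 1) | psi_n>. *)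
Definition prob (C : coin) (g : cstate) (j : int) (n : nat) : Rdefinitions.R :=
  sqmod (psi C g n j up 0) + sqmod (psi C g n j down 0).

Definition symmetric_in_distribution (C : coin) (g : cstate) : Prop :=
  forall (j : int) (n : nat), prob C g j n = prob C g (- j) n.

Definition dist_equiv (C1 : coin) (g1 : cstate) (C2 : coin) (g2 : cstate) : Prop :=
  forall (j : int) (n : nat), prob C1 g1 j n = prob C2 g2 j n.

Definition Ctheta (th : Rdefinitions.R) : coin :=
  \matrix_(a < 2, b < 2)
    (if a == b then (cos th)%:C
     else if a == up then (sin th)%:C else (- sin th)%:C).

Definition gamma_star : cstate :=
  \col_(k < 2) (if k == up then (Rinv (sqrt 2))%:C else Complex 0 (Rinv (sqrt 2))).

(* Main.v *)
Require Import Defs.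
From HB Require Import structures.
From mathcomp Require Import all_boot all_order all_algebra.
From mathcomp Require Import complex.
From mathcomp Require Import Rstruct.
From Stdlib Require Import Reals.
From mathcomp Require Import ring.
From Stdlib Require Import Lra.
Set Implicit Arguments. Unset Strict Implicit. Unset Printing Implicit Defensive.
Import Order.TTheory GRing.Theory Num.Theory.
Local Open Scope ring_scope.
Local Open Scope complex_scope.
Notation uu := Defs.up.
Notation dd := Defs.down.

Lemma mulmx2 (A : coin) (v : cstate) k : (A *m v) k 0 = A k uu * v uu 0 + A k dd * v dd 0.
Proof.
rewrite mxE big_ord_recl big_ord1.
have -> : lift ord0 ord0 = dd :> 'I_2 by apply/val_inj.
by []. Qed.

Lemma walk_up C f j : walk C f j uu 0 = C uu uu * f (j-1) uu 0 + C uu dd * f (j-1) dd 0.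
Proof. by rewrite /walk mxE eqxx mulmx2. Qed.
Lemma walk_down C f j : walk C f j dd 0 = C dd uu * f (j+1) uu 0 + C dd dd * f (j+1) dd 0.
Proof. by rewrite /walk mxE /= mulmx2. Qed.
Lemma psiS C g n : psi C g n.+1 = walk C (psi C g n) .
Proof. by rewrite /psi iterS. Qed.
Lemma psi0 C g j k : psi C g 0 j k 0 = if j == 0 then g k 0 else 0.
Proof. by rewrite /psi /= /init; case: ifP => //; rewrite mxE. Qed.




Lemma sqmodE z : sqmod z = complex.Re z ^+ 2 + complex.Im z ^+ 2.
Proof. by []. Qed.
Lemma probE C g j n : prob C g j n = sqmod (psi C g n j uu 0) + sqmod (psi C g n j dd 0).
Proof. by []. Qed.
Lemma sqmodM (x y : Cx) : sqmod (x * y) = sqmod x * sqmod y.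
Proof. case: x => a b; case: y => c d. rewrite !sqmodE /=. 
have H : forall a b c d : Rdefinitions.R, ((a * c - b * d) ^+ 2 + (a * d + b * c) ^+ 2) =
  (a ^+ 2 + b ^+ 2) * (c ^+ 2 + d ^+ 2) by move=> *; ring.
exact: H.
Qed.
Lemma sqmod_ge0 x : 0 <= sqmod x.
Proof. by rewrite !sqmodE addr_ge0 // sqr_ge0. Qed.
Lemma sqmodJ x : sqmod ((conjc x)) = sqmod x.
Proof. by case: x => a b; rewrite !sqmodE [complex.Im _]/= [complex.Re _]/= sqrrN. Qed.
Lemma sqmodN x : sqmod (- x) = sqmod x.
Proof. by case: x => a b; rewrite !sqmodE [complex.Im _]/= [complex.Re _]/= !sqrrN. Qed.
Lemma sqmodC (r : Rdefinitions.R) : sqmod (r%:C) = r ^+ 2.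
Proof. by rewrite !sqmodE [complex.Im _]/= [complex.Re _]/= [0 ^+ 2]expr2 mulr0 addr0. Qed.
Lemma sqmod0 : sqmod 0 = 0.
Proof. by rewrite (sqmodC 0) expr0n. Qed.
Lemma sqmod1 : sqmod 1 = 1.
Proof. by rewrite (sqmodC 1) expr1n. Qed.
Lemma sqmodi : sqmod 'i = 1.
Proof. by rewrite !sqmodE [complex.Im _]/= [complex.Re _]/= [0 ^+ 2]expr2 mulr0 add0r expr1n. Qed.
Lemma mulJ x : x * (conjc x) = (sqmod x)%:C.
Proof. case: x => a b; rewrite !sqmodE /=. 
have H : forall a b : Rdefinitions.R, (a * a - b * - b) = a ^+ 2 + b ^+ 2 by move=> *; ring.
have H2 : forall a b : Rdefinitions.R, (a * - b + b * a) = 0 by move=> *; ring.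
rewrite /real_complex_def; congr Complex; [exact: H | exact: H2]. Qed.
Lemma Jmul x : (conjc x) * x = (sqmod x)%:C.
Proof. by rewrite mulrC mulJ. Qed.
Lemma sqmodX x n : sqmod (x ^+ n) = sqmod x ^+ n.
Proof. elim: n => [|n IH]; first by rewrite !expr0 sqmod1. by rewrite !exprS sqmodM IH. Qed.
Lemma sqmod_eq0 x : (sqmod x == 0) = (x == 0).
Proof. case: x => a b; rewrite !sqmodE [complex.Im _]/= [complex.Re _]/= paddr_eq0 ?sqr_ge0 // !sqrf_eq0.
by rewrite eq_complex /=. Qed.
Lemma sqmodV x : sqmod (x^-1) = (sqmod x)^-1.
Proof. have [->|nz] := eqVneq x 0; first by rewrite invr0 sqmod0 invr0.
have h : sqmod x * sqmod x^-1 = 1 by rewrite -sqmodM mulfV // sqmod1.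
have nz' : sqmod x != 0 by rewrite sqmod_eq0.
by rewrite -[sqmod x^-1]mul1r -(mulVf nz') -mulrA h mulr1. Qed.
Lemma sqmodXz x (j : int) : sqmod x = 1 -> sqmod (x ^ j) = 1.
Proof. move=> h; case: j => n; first by rewrite /= sqmodX h expr1n.
by rewrite NegzE -invr_expz sqmodV sqmodX h expr1n invr1. Qed.

Lemma sqmod_eq1 x : sqmod (x ^+ 2) = 1 -> sqmod x = 1.
Proof. rewrite sqmodX => h; apply/eqP; rewrite -(pexpr_eq1 (n:=2)) ?h //; exact: sqmod_ge0. Qed.

Section Gauge.
Variables (C C' : coin) (g g' : cstate) (d1 d2 : 'I_2 -> Cx).
Hypothesis (h1 : forall k, sqmod (d1 k) = 1) (h2 : forall k, sqmod (d2 k) = 1)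
  (hC : forall k l, C' k l = d1 k * C k l * d2 l) (hg : forall k, d2 k * g' k 0 = g k 0).

Let p := d2 uu * d1 uu.
Let q := d2 dd * d1 dd.
Let t := sqrtc (p / q).
Let s := q * t.

Lemma sqmod_p : sqmod p = 1. Proof. by rewrite /p sqmodM h1 h2 mulr1. Qed.
Lemma sqmod_q : sqmod q = 1. Proof. by rewrite /q sqmodM h1 h2 mulr1. Qed.
Lemma q_neq0 : q != 0. Proof. by rewrite -sqmod_eq0 sqmod_q oner_eq0. Qed.
Lemma t2 : t ^+ 2 = p / q. Proof. exact: sqr_sqrtc. Qed.
Lemma sqmod_t : sqmod t = 1.
Proof. by apply: sqmod_eq1; rewrite t2 sqmodM sqmodV sqmod_p sqmod_q invr1 mulr1. Qed.
Lemma t_neq0 : t != 0. Proof. by rewrite -sqmod_eq0 sqmod_t oner_eq0. Qed.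
Lemma sqmod_s : sqmod s = 1. Proof. by rewrite /s sqmodM sqmod_q sqmod_t mulr1. Qed.
Lemma st : s * t = p.
Proof. by rewrite /s -mulrA -expr2 t2 mulrCA mulfV ?mulr1 // q_neq0. Qed.

Lemma gauge_psi n j k : d2 k * psi C' g' n j k 0 = s ^+ n * t ^ j * psi C g n j k 0.
Proof.
elim: n j k => [|n IH] j k.
  rewrite /psi /= /init; case: eqP => [->|_]; first by rewrite expr0 expr0z !mul1r hg.
  by rewrite !mxE !mulr0.
have key1 : s ^+ n.+1 * t ^ j = p * (s ^+ n * t ^ (j - 1)).
  by rewrite -st exprS -{1}(subrK 1 j) expfzDr ?t_neq0 // expr1z; ring.
have key2 : s ^+ n.+1 * t ^ j = q * (s ^+ n * t ^ (j + 1)).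
  by rewrite expfzDr ?t_neq0 // expr1z /s exprS; ring.
have [->|] := eqVneq k uu.
  rewrite /psi /= !walk_up -!/(psi _ _ _) !hC key1.
  have -> : d2 uu * (d1 uu * C uu uu * d2 uu * psi C' g' n (j - 1) uu 0 +
     d1 uu * C uu dd * d2 dd * psi C' g' n (j - 1) dd 0) =
     p * (C uu uu * (d2 uu * psi C' g' n (j - 1) uu 0) + C uu dd * (d2 dd * psi C' g' n (j - 1) dd 0)).
    by rewrite /p; ring.
  rewrite !IH; ring.
rewrite -(inj_eq val_inj) /= => /negbTE hk.
have -> : k = dd by apply: val_inj; case: k hk => [[|[|]]] //.
rewrite /psi /= !walk_down -!/(psi _ _ _) !hC key2.
have -> : d2 dd * (d1 dd * C dd uu * d2 uu * psi C' g' n (j + 1) uu 0 +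
   d1 dd * C dd dd * d2 dd * psi C' g' n (j + 1) dd 0) =
   q * (C dd uu * (d2 uu * psi C' g' n (j + 1) uu 0) + C dd dd * (d2 dd * psi C' g' n (j + 1) dd 0)).
  by rewrite /q; ring.
rewrite !IH; ring.
Qed.

Lemma gauge_prob j n : prob C' g' j n = prob C g j n.
Proof.
have e : forall k, sqmod (psi C' g' n j k 0) = sqmod (psi C g n j k 0).
  move=> k; have := congr1 sqmod (gauge_psi n j k).
  by rewrite !sqmodM h2 sqmodX sqmod_s sqmodXz ?sqmod_t // expr1n !mul1r.
by rewrite !probE !e.
Qed.
End Gauge.

Lemma conjcD (x y : Cx) : conjc (x + y) = conjc x + conjc y. Proof. exact: rmorphD. Qed.
Lemma conjcM (x y : Cx) : conjc (x * y) = conjc x * conjc y. Proof. exact: rmorphM. Qed.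
Lemma conj_psi (C : coin) (g g' : cstate) :
  (forall k l, (conjc (C k l)) = C k l) -> (forall k, g' k 0 = (conjc (g k 0))) ->
  forall n j k, psi C g' n j k 0 = (conjc (psi C g n j k 0)).
Proof.
move=> hC hg; elim=> [|n IH] j k.
  rewrite /psi /= /init; case: eqP => _; first exact: hg.
  by rewrite !mxE conjc0.
have [->|] := eqVneq k uu.
  by rewrite /psi /= !walk_up -!/(psi _ _ _) !IH conjcD !conjcM !hC.
rewrite -(inj_eq val_inj) /= => /negbTE hk.
have -> : k = dd by apply: val_inj; case: k hk => [[|[|]]] //.
by rewrite /psi /= !walk_down -!/(psi _ _ _) !IH conjcD !conjcM !hC.
Qed.

Lemma conj_prob (C : coin) (g g' : cstate) :
  (forall k l, (conjc (C k l)) = C k l) -> (forall k, g' k 0 = (conjc (g k 0))) ->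
  forall j n, prob C g' j n = prob C g j n.
Proof. by move=> hC hg j n; rewrite !probE !(conj_psi hC hg) !sqmodJ. Qed.

Lemma refl_psi (C : coin) (g g' : cstate) :
  C dd dd = C uu uu -> C dd uu = - C uu dd ->
  g' uu 0 = g dd 0 -> g' dd 0 = - g uu 0 ->
  forall n j, psi C g' n j uu 0 = psi C g n (-j) dd 0 /\ psi C g' n j dd 0 = - psi C g n (-j) uu 0.
Proof.
move=> e1 e2 hu hd; elim=> [|n IH] j.
  rewrite /psi /= /init oppr_eq0; case: eqP => _; first by [].
  by rewrite !mxE oppr0.
rewrite /psi /= !walk_up !walk_down -!/(psi _ _ _).
have [a1 a2] := IH (j - 1); have [b1 b2] := IH (j + 1).
rewrite a1 a2 b1 b2 opprB addrC opprD addrC.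
have E : (1 - j) = - j + 1 by rewrite addrC. rewrite ?E. split; first by rewrite e1 e2; ring.
by rewrite e1 e2; ring.
Qed.

Lemma iC (r : Rdefinitions.R) : 'i * r%:C = Complex 0 r.
Proof. by rewrite /real_complex_def; simpc; congr Complex. Qed.
Lemma NC (r : Rdefinitions.R) : (- r)%:C = - r%:C.
Proof. exact: rmorphN. Qed.
Lemma ii : 'i * 'i = -1 :> Cx.
Proof. by rewrite -expr2 sqr_i. Qed.

Lemma Ct_uu th : Ctheta th uu uu = (cos th)%:C. Proof. by rewrite mxE eqxx. Qed.
Lemma Ct_dd th : Ctheta th dd dd = (cos th)%:C. Proof. by rewrite mxE eqxx. Qed.
Lemma Ct_ud th : Ctheta th uu dd = (sin th)%:C. Proof. by rewrite mxE. Qed.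
Lemma Ct_du th : Ctheta th dd uu = - (sin th)%:C. Proof. by rewrite mxE /= NC. Qed.
Lemma gs_u : gamma_star uu 0 = (Rinv (sqrt 2))%:C. Proof. by rewrite mxE. Qed.
Lemma gs_d : gamma_star dd 0 = 'i * (Rinv (sqrt 2))%:C. Proof. by rewrite mxE iC. Qed.

Lemma part1 th : symmetric_in_distribution (Ctheta th) gamma_star.
Proof.
move=> j n.
pose g' : cstate := \col_k ('i * gamma_star k 0).
have hg : forall k, (- 'i) * g' k 0 = gamma_star k 0.
  by move=> k; rewrite mxE mulrA mulNr ii opprK mul1r.
have G : prob (Ctheta th) g' j n = prob (Ctheta th) gamma_star j n.
  apply: (@gauge_prob _ _ _ _ (fun _ => 'i) (fun _ => - 'i)) => //.
  - by move=> _; rewrite sqmodi.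
  - by move=> _; rewrite sqmodN sqmodi.
  - by move=> k l; rewrite mulrC mulrA mulNr ii opprK mul1r.
have [e1 e2] : psi (Ctheta th) g' n j uu 0 = psi (Ctheta th) gamma_star n (-j) dd 0 /\
  psi (Ctheta th) g' n j dd 0 = - psi (Ctheta th) gamma_star n (-j) uu 0.
  apply: refl_psi.
  - by rewrite Ct_uu Ct_dd.
  - by rewrite Ct_du Ct_ud.
  - by rewrite mxE gs_u gs_d.
  - by rewrite mxE gs_u gs_d mulrA ii mulN1r.
by rewrite -G !probE e1 e2 sqmodN addrC.
Qed.

Lemma ReD (x y : Cx) : complex.Re (x + y) = complex.Re x + complex.Re y. Proof. by case: x; case: y. Qed.
Lemma ImD (x y : Cx) : complex.Im (x + y) = complex.Im x + complex.Im y. Proof. by case: x; case: y. Qed.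
Lemma ReN (x : Cx) : complex.Re (- x) = - complex.Re x. Proof. by case: x. Qed.
Lemma ImN (x : Cx) : complex.Im (- x) = - complex.Im x. Proof. by case: x. Qed.
Lemma ReCM (r : Rdefinitions.R) (x : Cx) : complex.Re (r%:C * x) = r * complex.Re x.
Proof. case: x => a b /=. have H : forall r a b : Rdefinitions.R, r * a - 0 * b = r * a by move=> *; ring. exact: H. Qed.
Lemma ImCM (r : Rdefinitions.R) (x : Cx) : complex.Im (r%:C * x) = r * complex.Im x.
Proof. case: x => a b /=. have H : forall r a b : Rdefinitions.R, r * b + 0 * a = r * b by move=> *; ring. exact: H. Qed.
Lemma Re0 : complex.Re (0 : Cx) = 0. Proof. by []. Qed.
Lemma Im0 : complex.Im (0 : Cx) = 0. Proof. by []. Qed.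

Ltac psicomp := rewrite /psi /= !(walk_up, walk_down) /init /= ?mxE ?(mulr0, addr0, add0r).

Section Gen.
Variables (C : coin) (g : cstate).
Let a := C uu uu.
Let b := C uu dd.
Let e := C dd uu.
Let f := C dd dd.
Let x := g uu 0.
Let y := g dd 0.
Let u1 := a * x + b * y.
Let u2 := e * x + f * y.
Lemma psi_1u : psi C g 1 1 uu 0 = u1. Proof. by psicomp. Qed.
Lemma psi_1d : psi C g 1 1 dd 0 = 0. Proof. by psicomp. Qed.
Lemma psi_m1u : psi C g 1 (-1) uu 0 = 0. Proof. by psicomp. Qed.
Lemma psi_m1d : psi C g 1 (-1) dd 0 = u2. Proof. by psicomp. Qed.
Lemma psi_22u : psi C g 2 2 uu 0 = a * u1. Proof. by psicomp. Qed.
Lemma psi_22d : psi C g 2 2 dd 0 = 0. Proof. by psicomp. Qed.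
Lemma psi_31u : psi C g 3 1 uu 0 = a * (b * u2) + b * (e * u1). Proof. by psicomp. Qed.
Lemma psi_31d : psi C g 3 1 dd 0 = e * (a * u1). Proof. by psicomp. Qed.
Lemma psi_3m1u : psi C g 3 (-1) uu 0 = b * (f * u2). Proof. by psicomp. Qed.
Lemma psi_3m1d : psi C g 3 (-1) dd 0 = e * (b * u2) + f * (e * u1). Proof. by psicomp. Qed.
End Gen.

Section Core.
Variables (th : Rdefinitions.R) (g : cstate).
Let C := Ctheta th.
Let c := cos th.
Let s := sin th.
Let x1 := complex.Re (g uu 0).
Let x2 := complex.Im (g uu 0).
Let y1 := complex.Re (g dd 0).
Let y2 := complex.Im (g dd 0).

Ltac pushre := rewrite ?Ct_uu ?Ct_ud ?Ct_du ?Ct_dd ?sqmod0 ?addr0 !sqmodE ?mulNr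
  ?(ReD, ImD, ReN, ImN, ReCM, ImCM) -/x1 -/x2 -/y1 -/y2 -/c -/s.

Let u1r := c*x1 + s*y1.
Let u1i := c*x2 + s*y2.
Let u2r := - s*x1 + c*y1.
Let u2i := - s*x2 + c*y2.
Lemma P11 : prob C g 1 1 = u1r^+2 + u1i^+2.
Proof. rewrite probE psi_1u psi_1d. pushre. rewrite /u1r /u1i; ring. Qed.
Lemma Pm11 : prob C g (-1) 1 = u2r^+2 + u2i^+2.
Proof. rewrite probE psi_m1u psi_m1d. pushre. rewrite /u2r /u2i; ring. Qed.
Lemma P22 : prob C g 2 2 = (c * u1r)^+2 + (c * u1i)^+2.
Proof. rewrite probE psi_22u psi_22d. pushre. rewrite /u1r /u1i; ring. Qed.
Lemma P31 : prob C g 1 3 = (c*s*u2r - s*s*u1r)^+2 + (c*s*u2i - s*s*u1i)^+2 + (s*c*u1r)^+2 + (s*c*u1i)^+2.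
Proof. rewrite probE psi_31u psi_31d. pushre. rewrite /u1r /u1i /u2r /u2i; ring. Qed.
Lemma Pm31 : prob C g (-1) 3 = (s*c*u2r)^+2 + (s*c*u2i)^+2 + (s*s*u2r + c*s*u1r)^+2 + (s*s*u2i + c*s*u1i)^+2.
Proof. rewrite probE psi_3m1u psi_3m1d. pushre. rewrite /u1r /u1i /u2r /u2i; ring. Qed.
End Core.

Lemma sq2 : sqrt 2 * sqrt 2 = IZR 2. Proof. exact: (sqrt_sqrt 2 (Rlt_le _ _ Rlt_0_2)). Qed.
Lemma sq2inv : sqrt 2 * Rinv (sqrt 2) = 1. Proof. exact: (Rinv_r _ sqrt2_neq_0). Qed.
Lemma dbl (a : Rdefinitions.R) : IZR 2 * a = a + a. Proof. exact: double. Qed.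
Lemma CM (r r' : Rdefinitions.R) : r%:C * r'%:C = (r * r')%:C. Proof. by rewrite rmorphM. Qed.
Lemma C1 : (1 : Rdefinitions.R)%:C = 1. Proof. by []. Qed.
Lemma C0 : (0 : Rdefinitions.R)%:C = 0. Proof. by []. Qed.
Lemma ord2 (k : 'I_2) : k = uu \/ k = dd.
Proof. case: k => [[|[|//]]] p; [left|right]; exact: val_inj. Qed.
Lemma sqmod_s2 z : sqmod ((sqrt 2)%:C * z) = sqmod z + sqmod z.
Proof. by rewrite sqmodM sqmodC expr2 sq2 dbl. Qed.

Lemma final th (g : cstate) : (cos th != 0 -> sin th != 0 -> g dd 0 = 'i * g uu 0) ->
  sqmod (g uu 0) + sqmod (g uu 0) = 1 -> sqmod (g dd 0) + sqmod (g dd 0) = 1 ->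
  forall j n, prob (Ctheta th) gamma_star j n = prob (Ctheta th) g j n.
Proof.
move=> hyx hx hy j n.
pose d2 := fun k : 'I_2 => if k == uu then (sqrt 2)%:C * g uu 0 else - 'i * ((sqrt 2)%:C * g dd 0).
have h2 : forall k, sqmod (d2 k) = 1.
  move=> k; rewrite /d2; case: ifP => _; first by rewrite sqmod_s2.
  by rewrite sqmodM sqmodN sqmodi mul1r sqmod_s2.
pose d1 := fun k : 'I_2 => if cos th == 0 then conjc (d2 (if k == uu then dd else uu)) else conjc (d2 k).
have h1 : forall k, sqmod (d1 k) = 1.
  by move=> k; rewrite /d1; case: ifP => _; rewrite sqmodJ h2.
have J2 : forall k, conjc (d2 k) * d2 k = 1 by move=> k; rewrite Jmul h2.
apply: (@gauge_prob _ _ _ _ d1 d2) => //.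
- move=> k l; rewrite /d1.
  have [c0|c0] := eqVneq (cos th) 0.
    { case: (ord2 k) => ->; case: (ord2 l) => ->;
      rewrite ?Ct_uu ?Ct_ud ?Ct_du ?Ct_dd ?c0 ?C0 ?mulr0 ?mul0r //= ?eqxx.
      all: by rewrite mulrAC J2 mul1r. }
  have [s0|s0] := eqVneq (sin th) 0.
    { case: (ord2 k) => ->; case: (ord2 l) => ->;
      rewrite ?Ct_uu ?Ct_ud ?Ct_du ?Ct_dd ?s0 ?C0 ?oppr0 ?mulr0 ?mul0r //= ?eqxx.
      all: by rewrite mulrAC J2 mul1r. }
  have e : d2 dd = d2 uu.
    by rewrite /d2 /= (hyx c0 s0) mulrCA (mulrA (- 'i)) mulNr ii opprK mul1r.
  { case: (ord2 k) => ->; case: (ord2 l) => ->;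
    rewrite ?Ct_uu ?Ct_ud ?Ct_du ?Ct_dd /= ?eqxx ?e.
    all: by rewrite mulrAC J2 mul1r. }
- move=> k; case: (ord2 k) => ->; rewrite /d2 /=.
    by rewrite gs_u -mulrA mulrCA CM sq2inv C1 mulr1.
  rewrite gs_d mulrCA -!mulrA mulrCA !mulrA mulNr ii opprK mul1r -mulrA mulrCA CM sq2inv C1.
  by rewrite mulr1.
Qed.

Lemma alg (R : realFieldType) (c s x1 x2 y1 y2 : R) :
  c^+2 + s^+2 = 1 ->
  let u1r := c*x1 + s*y1 in let u1i := c*x2 + s*y2 in
  let u2r := - s*x1 + c*y1 in let u2i := - s*x2 + c*y2 in
  u1r^+2 + u1i^+2 = u2r^+2 + u2i^+2 ->
  (c*s*u2r - s*s*u1r)^+2 + (c*s*u2i - s*s*u1i)^+2 + (s*c*u1r)^+2 + (s*c*u1i)^+2 =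
  (s*c*u2r)^+2 + (s*c*u2i)^+2 + (s*s*u2r + c*s*u1r)^+2 + (s*s*u2i + c*s*u1i)^+2 ->
  x1^+2 + x2^+2 - y1^+2 - y2^+2 = 0 /\ (c != 0 -> s != 0 -> x1*y1 + x2*y2 = 0).
Proof.
move=> hcs u1r u1i u2r u2i E1 E3.
set A := x1^+2 + x2^+2 - y1^+2 - y2^+2.
set B := x1*y1 + x2*y2.
have F1 : (c^+2 - s^+2) * A + 4 * c * s * B = 0.
  have : u1r^+2 + u1i^+2 - (u2r^+2 + u2i^+2) = 0 by rewrite E1 subrr.
  by rewrite /u1r /u1i /u2r /u2i /A /B => <-; ring.
have F3 : s^+3 * c * (- c * s * A + (c^+2 - s^+2) * B) = 0.
  have hD : u1r^+2 + u1i^+2 - (u2r^+2 + u2i^+2) = 0 by rewrite E1 subrr.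
  have Id : (c*s*u2r - s*s*u1r)^+2 + (c*s*u2i - s*s*u1i)^+2 + (s*c*u1r)^+2 + (s*c*u1i)^+2 -
    ((s*c*u2r)^+2 + (s*c*u2i)^+2 + (s*s*u2r + c*s*u1r)^+2 + (s*s*u2i + c*s*u1i)^+2) =
    s^+4 * (u1r^+2 + u1i^+2 - (u2r^+2 + u2i^+2)) - 4 * (s^+3 * c * (- c * s * A + (c^+2 - s^+2) * B)).
    by rewrite /u1r /u1i /u2r /u2i /A /B; ring.
  move: Id; rewrite E3 subrr hD mulr0 sub0r => /eqP; rewrite eq_sym oppr_eq0 mulf_eq0 => /orP [|/eqP //].
  by rewrite pnatr_eq0.
have hA : c != 0 -> s != 0 -> A = 0 /\ B = 0.
  move=> c0 s0.
  have R0 : - c * s * A + (c^+2 - s^+2) * B = 0.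
    apply/eqP; move/eqP: F3; rewrite !mulf_eq0 (negbTE c0) (negbTE s0).
    by [].
  have A0 : A = (c^+2 - s^+2) * ((c^+2 - s^+2) * A + 4 * c * s * B) - 4 * c * s * (- c * s * A + (c^+2 - s^+2) * B).
    have e : A = (c^+2+s^+2)^+2 * A by rewrite hcs expr1n mul1r.
    by rewrite {1}e; ring.
  rewrite F1 R0 !mulr0 subrr in A0; split => //.
  move: F1; rewrite A0 mulr0 add0r => /eqP; rewrite !mulf_eq0 (negbTE c0) (negbTE s0) orbF.
  by rewrite pnatr_eq0 /= => /eqP.
split; last by move=> c0 s0; case: (hA c0 s0).
have [c0|c0] := eqVneq c 0.
  have hs : s^+2 = 1 by move: hcs; rewrite c0 expr0n /= add0r.
  have -> : A = - ((c^+2 - s^+2) * A + 4 * c * s * B) by rewrite c0 hs; ring.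
  by rewrite F1 oppr0.
have [s0|s0] := eqVneq s 0.
  have hc : c^+2 = 1 by move: hcs; rewrite s0 expr0n /= addr0.
  have -> : A = ((c^+2 - s^+2) * A + 4 * c * s * B) by rewrite s0 hc; ring.
  by rewrite F1.
by case: (hA c0 s0).
Qed.

Lemma cplxE (z : Cx) : z = Complex (complex.Re z) (complex.Im z). Proof. by case: z. Qed.
Lemma iM (a b : Rdefinitions.R) : 'i * Complex a b = Complex (- b) a.
Proof. by simpc; congr Complex. Qed.

Lemma JN (z : Cx) : conjc (- z) = - conjc z. Proof. exact: rmorphN. Qed.
Lemma Jreal (r : Rdefinitions.R) : conjc (r%:C) = r%:C. Proof. exact: conjc_real. Qed.
Lemma sumsq0 (a b : Rdefinitions.R) : a^+2 + b^+2 = 0 -> a = 0 /\ b = 0.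
Proof. move/eqP; rewrite paddr_eq0 ?sqr_ge0 // !sqrf_eq0 => /andP [/eqP -> /eqP ->] //. Qed.

Lemma core th (g : cstate) : unit_vec g -> symmetric_in_distribution (Ctheta th) g ->
  forall j n, prob (Ctheta th) gamma_star j n = prob (Ctheta th) g j n.
Proof.
move=> hu hs.
have E1 := hs 1 1; have E3 := hs 1 3.
rewrite P11 Pm11 in E1; rewrite P31 Pm31 in E3.
have hcs : cos th ^+ 2 + sin th ^+ 2 = 1 by rewrite addrC; exact: sin2_cos2.
have [A0 B0] := alg hcs E1 E3.
set x1 := complex.Re (g uu 0) in A0 B0.
set x2 := complex.Im (g uu 0) in A0 B0.
set y1 := complex.Re (g dd 0) in A0 B0.
set y2 := complex.Im (g dd 0) in A0 B0.
have hxy : sqmod (g uu 0) = sqmod (g dd 0).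
  by rewrite !sqmodE -/x1 -/x2 -/y1 -/y2; apply/eqP; rewrite -subr_eq0 opprD addrA; apply/eqP.
have hx : sqmod (g uu 0) + sqmod (g uu 0) = 1 by rewrite {2}hxy; exact: hu.
have hy : sqmod (g dd 0) + sqmod (g dd 0) = 1 by rewrite -{1}hxy; exact: hu.
have [c0|c0] := eqVneq (cos th) 0.
  by apply: final => //; rewrite c0 eqxx.
have [s0|s0] := eqVneq (sin th) 0.
  by apply: final => // _; rewrite s0 eqxx.
have B := B0 c0 s0.
have PQ : ((y1 + x2)^+2 + (y2 - x1)^+2) * ((y1 - x2)^+2 + (y2 + x1)^+2) = 0.
  have -> : ((y1 + x2)^+2 + (y2 - x1)^+2) * ((y1 - x2)^+2 + (y2 + x1)^+2) =
    (x1^+2 + x2^+2 - y1^+2 - y2^+2)^+2 + 4 * (x1*y1 + x2*y2)^+2 by ring.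
  by rewrite A0 B expr0n /= mulr0 addr0.
move/eqP: PQ; rewrite mulf_eq0 => /orP [] /eqP /sumsq0 [].
- move=> /eqP; rewrite addr_eq0 => /eqP e1 /eqP; rewrite subr_eq0 => /eqP e2.
  apply: final => // _ _.
  by rewrite (cplxE (g dd 0)) (cplxE (g uu 0)) iM -/x1 -/x2 -/y1 -/y2 e1 e2.
- move=> /eqP; rewrite subr_eq0 => /eqP e1 /eqP; rewrite addr_eq0 => /eqP e2.
  pose g' : cstate := \col_k conjc (g k 0).
  have hg' : forall k, g' k 0 = conjc (g k 0) by move=> k; rewrite mxE.
  move=> j n; rewrite -(@conj_prob _ g g') //; last first.
    move=> k l; case: (ord2 k) => ->; case: (ord2 l) => ->;
      by rewrite ?Ct_uu ?Ct_ud ?Ct_du ?Ct_dd ?JN Jreal.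
  apply: final => //; rewrite ?hg' ?sqmodJ //.
  move=> _ _; rewrite (cplxE (g dd 0)) (cplxE (g uu 0)) -/x1 -/x2 -/y1 -/y2 e1 e2 /=.
  by rewrite iM !opprK.
Qed.

Lemma mulmx22 (A B : coin) k l : (A *m B) k l = A k uu * B uu l + A k dd * B dd l.
Proof.
rewrite mxE big_ord_recl big_ord1.
have -> : lift ord0 ord0 = dd :> 'I_2 by apply/val_inj.
by []. Qed.

Lemma unitary_entries (C : coin) : unitary C ->
  sqmod (C uu uu) + sqmod (C uu dd) = 1 /\ sqmod (C dd uu) + sqmod (C dd dd) = 1 /\
  conjc (C uu uu) * C dd uu + conjc (C uu dd) * C dd dd = 0.
Proof.
move=> hU.
have E : forall k l, C k uu * conjc (C l uu) + C k dd * conjc (C l dd) = (1%:M : coin) k l.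
  by move=> k l; rewrite -hU mulmx22 /adjoint !mxE.
have R1 : forall k, sqmod (C k uu) + sqmod (C k dd) = 1.
  move=> k; have := E k k; rewrite !mulJ -rmorphD mxE eqxx /= => h.
  by apply: complexI; rewrite h.
split; first exact: R1. split; first exact: R1.
have := E dd uu; rewrite mxE /= => h.
by rewrite (mulrC (conjc (C uu uu))) (mulrC (conjc (C uu dd))) h.
Qed.

Lemma sqrt_ge0' (x : Rdefinitions.R) : 0 <= sqrt x. Proof. apply/RleP; exact: sqrt_pos. Qed.
Lemma sqrtsq (x : Rdefinitions.R) : 0 <= x -> sqrt x ^+ 2 = x.
Proof. move/RleP => h; rewrite expr2; exact: sqrt_sqrt h. Qed.

Definition ph (z : Cx) : Cx := if z == 0 then 1 else z / (sqrt (sqmod z))%:C.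

Lemma ph_dec z : z = (sqrt (sqmod z))%:C * ph z.
Proof.
rewrite /ph; case: eqP => [->|/eqP nz]; first by rewrite sqmod0 sqrt_0 C0 mul0r.
have r0 : (sqrt (sqmod z))%:C != 0.
  apply/negP => /eqP h; move: nz; rewrite -sqmod_eq0 -(sqrtsq (sqmod_ge0 z)).
  have h0 : sqrt (sqmod z) = 0 by apply: complexI; rewrite h.
  by rewrite h0 expr0n /= eqxx.
by rewrite mulrC -mulrA mulVf ?mulr1.
Qed.

Lemma ph_sq z : sqmod (ph z) = 1.
Proof.
rewrite /ph; case: eqP => [_|/eqP nz]; first exact: sqmod1.
rewrite sqmodM sqmodV sqmodC sqrtsq ?sqmod_ge0 // mulfV //.
by rewrite sqmod_eq0.
Qed.

Lemma theta_ex (ra rb : Rdefinitions.R) : 0 <= ra -> 0 <= rb -> ra ^+ 2 + rb ^+ 2 = 1 ->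
  exists th, (0 <= th <= PI / 2)%R /\ cos th = ra /\ sin th = rb.
Proof.
move=> ha hb h.
have ra1 : ra <= 1.
  rewrite -(expr_le1 (n:=2)) //; rewrite -h lerDl; exact: sqr_ge0.
have hr : (-1 <= ra <= 1)%R.
  move/RleP: ha => ha; move/RleP: ra1 => ra1; split => //.
  apply: Rle_trans _ ha; left; exact: Ropp_lt_gt_0_contravar Rlt_0_1.
exists (acos ra).
have cs : cos (acos ra) = ra by exact: cos_acos.
split; last split => //.
  have [b0 b1] := acos_bound ra; split => //.
  case: (Rle_or_lt (acos ra) (PI / 2)) => // hlt.
  have : (cos (acos ra) < 0)%R.
    apply: cos_lt_0 => //.
    apply: Rle_lt_trans b1 _; have := PI_RGT_0; lra.
  by rewrite cs => /RltP; rewrite ltNge ha.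
rewrite sin_acos //.
have -> : (1 - Rsqr ra)%R = (rb * rb)%R.
  have h' : (ra * ra + rb * rb = 1)%R := h. rewrite /Rsqr; lra.
move/RleP: hb => hb; exact: sqrt_square.
Qed.

Lemma normal (C : coin) : unitary C -> exists th (d1 d2 : 'I_2 -> Cx),
  (0 <= th <= PI / 2)%R /\ (forall k, sqmod (d1 k) = 1) /\ (forall k, sqmod (d2 k) = 1) /\
  (forall k l, Ctheta th k l = d1 k * C k l * d2 l).
Proof.
move=> hU; have [Ra [Rb O]] := unitary_entries hU.
set a := C uu uu in Ra O; set b := C uu dd in Ra O.
set e := C dd uu in Rb O; set f := C dd dd in Rb O.
set ra := sqrt (sqmod a); set rb := sqrt (sqmod b).
have hra : ra ^+ 2 = sqmod a by rewrite sqrtsq ?sqmod_ge0.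
have hrb : rb ^+ 2 = sqmod b by rewrite sqrtsq ?sqmod_ge0.
have hab : ra ^+ 2 + rb ^+ 2 = 1 by rewrite hra hrb.
have [th [hth [hc0 hs0]]] := theta_ex (sqrt_ge0' _) (sqrt_ge0' _) hab.
have hc : cos th = ra by exact: hc0.
have hs : sin th = rb by exact: hs0.
clear hc0 hs0.
set pa := ph a; set pb := ph b.
have ea : a = ra%:C * pa by exact: ph_dec.
have eb : b = rb%:C * pb by exact: ph_dec.
have Ka : conjc pa * pa = 1 by rewrite Jmul ph_sq.
have Kb : conjc pb * pb = 1 by rewrite Jmul ph_sq.
have Ka' : pa * conjc pa = 1 by rewrite mulrC.
have spa : sqmod pa = 1 by exact: ph_sq.
have spb : sqmod pb = 1 by exact: ph_sq.
clearbody ra rb pa pb.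
pose d2 := fun k : 'I_2 => if k == uu then 1 else pa * conjc pb.
pose X := e; pose Y := f * (pa * conjc pb).
pose mu := ra%:C * Y - rb%:C * X.
pose d1 := fun k : 'I_2 => if k == uu then conjc pa else conjc mu.
have O' : ra%:C * conjc pa * e + rb%:C * conjc pb * f = 0.
  by move: O; rewrite ea eb !conjcM !Jreal.
have H0 : ra%:C * X + rb%:C * Y = 0.
  have -> : ra%:C * X + rb%:C * Y = pa * (ra%:C * conjc pa * e + rb%:C * conjc pb * f) +
     (1 - pa * conjc pa) * (ra%:C * e) by rewrite /X /Y; ring.
  by rewrite O' Ka' subrr mulr0 mul0r addr0.
have habC : ra%:C ^+ 2 + rb%:C ^+ 2 = 1 by rewrite -!rmorphXn -rmorphD hab.
have hX : X = - rb%:C * mu.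
  apply/eqP; rewrite -subr_eq0; apply/eqP.
  have -> : X - - rb%:C * mu = (1 - (ra%:C ^+ 2 + rb%:C ^+ 2)) * X + ra%:C * (ra%:C * X + rb%:C * Y)
    by rewrite /mu; ring.
  by rewrite habC H0 subrr mul0r mulr0 addr0.
have hY : Y = ra%:C * mu.
  apply/eqP; rewrite -subr_eq0; apply/eqP.
  have -> : Y - ra%:C * mu = (1 - (ra%:C ^+ 2 + rb%:C ^+ 2)) * Y + rb%:C * (ra%:C * X + rb%:C * Y)
    by rewrite /mu; ring.
  by rewrite habC H0 subrr mul0r mulr0 addr0.
have sd : sqmod (pa * conjc pb) = 1 by rewrite sqmodM sqmodJ spa spb mulr1.
have smu : sqmod mu = 1.
  have : sqmod X + sqmod Y = 1 by rewrite /Y sqmodM sd mulr1.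
  rewrite hX hY !sqmodM sqmodN !sqmodC -mulrDl addrC hab mul1r; exact.
have Kmu : conjc mu * mu = 1 by rewrite Jmul smu.
exists th, d1, d2; split => //; split.
  by move=> k; rewrite /d1; case: ifP => _; rewrite sqmodJ ?spa ?smu.
split.
  by move=> k; rewrite /d2; case: ifP => _; rewrite ?sqmod1 ?sd.
move=> k l; case: (ord2 k) => ->; case: (ord2 l) => ->; rewrite /d1 /d2 /= ?eqxx -/a -/b -/e -/f.
- rewrite Ct_uu hc ea.
  have -> : conjc pa * (ra%:C * pa) * 1 = ra%:C * (conjc pa * pa) by ring.
  by rewrite Ka mulr1.
- rewrite Ct_ud hs eb.
  have -> : conjc pa * (rb%:C * pb) * (pa * conjc pb) = rb%:C * (conjc pa * pa) * (conjc pb * pb) by ring.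
  by rewrite Ka Kb !mulr1.
- rewrite Ct_du hs.
  have -> : e = - rb%:C * mu by exact: hX.
  have -> : conjc mu * (- rb%:C * mu) * 1 = - rb%:C * (conjc mu * mu) by ring.
  by rewrite Kmu mulr1.
- rewrite Ct_dd hc.
  have -> : conjc mu * f * (pa * conjc pb) = conjc mu * Y by rewrite /Y; ring.
  rewrite hY.
  have -> : conjc mu * (ra%:C * mu) = ra%:C * (conjc mu * mu) by ring.
  by rewrite Kmu mulr1.
Qed.


Lemma gsE : complex.Re (gamma_star uu 0) = Rinv (sqrt 2) /\ complex.Im (gamma_star uu 0) = 0 /\
  complex.Re (gamma_star dd 0) = 0 /\ complex.Im (gamma_star dd 0) = Rinv (sqrt 2).
Proof. by rewrite !mxE. Qed.

Lemma P22gs th : prob (Ctheta th) gamma_star 2 2 = cos th ^+ 2 * (Rinv (sqrt 2)) ^+ 2.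
Proof.
have [e1 [e2 [e3 e4]]] := gsE.
have hcs : cos th ^+ 2 + sin th ^+ 2 = 1 by rewrite addrC; exact: sin2_cos2.
rewrite P22 e1 e2 e3 e4.
have -> : forall c s r : Rdefinitions.R, (c * (c * r + s * 0)) ^+ 2 + (c * (c * 0 + s * r)) ^+ 2 =
  c ^+ 2 * r ^+ 2 * (c ^+ 2 + s ^+ 2) by move=> *; ring.
by rewrite hcs mulr1.
Qed.

Theorem theorem2 :
  (forall th : R, (0 <= th <= PI / 2)%R ->
     symmetric_in_distribution (Ctheta th) gamma_star)
  /\ (forall (C : coin) (g : cstate), unitary C -> unit_vec g ->
        symmetric_in_distribution C g ->
        exists th : R, (0 <= th <= PI / 2)%R /\ dist_equiv C g (Ctheta th) gamma_star)
  /\ (forall th th' : R, (0 <= th <= PI / 2)%R -> (0 <= th' <= PI / 2)%R ->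
        dist_equiv (Ctheta th) gamma_star (Ctheta th') gamma_star -> th = th').
Proof.
split; first by move=> th _; exact: part1.
split.
  move=> C g hU hu hs.
  have [th [d1 [d2 [hth [h1 [h2 hC]]]]]] := normal hU.
  pose g' : cstate := \col_k (conjc (d2 k) * g k 0).
  have hg : forall k, d2 k * g' k 0 = g k 0.
    by move=> k; rewrite mxE mulrA mulJ h2 C1 mul1r.
  have G : forall j n, prob (Ctheta th) g' j n = prob C g j n.
    by move=> j n; apply: (gauge_prob h1 h2 hC hg).
  exists th; split => // j n.
  have hu' : unit_vec g'.
    by rewrite /unit_vec !mxE !sqmodM !sqmodJ !h2 !mul1r; exact: hu.
  have hs' : symmetric_in_distribution (Ctheta th) g' by move=> j' n'; rewrite !G.
  by rewrite -G (core hu' hs').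
move=> th th' [a0 a1] [b0 b1] hd.
have := hd 2 2; rewrite !P22gs => /mulIf h.
have r0 : Rinv (sqrt 2) ^+ 2 != 0.
  by rewrite expf_eq0 /=; apply/eqP; exact: (Rinv_neq_0_compat _ sqrt2_neq_0).
have PI0 := PI_RGT_0.
have c0 : 0 <= cos th by apply/RleP; apply: cos_ge_0 => //; lra.
have c0' : 0 <= cos th' by apply/RleP; apply: cos_ge_0 => //; lra.
have e : cos th = cos th' by apply/eqP; rewrite -(eqrXn2 (n:=2)) // (h r0).
by apply: cos_inj => //; lra.
Qed.
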